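(* Let $p=p(n)$ and suppose that $d=p(n-1)\ge \log^3 n$. Let $G=(V,E)$ be an $n$-vertex graph such that for some positive constant $c$: (i) for every $S\subseteq V$ with $s=|S|$ and every $r\in\mathbb N$, $\big|\bigcup_{v\in S}N(v,r)\big|\ge c\min\{sd^r,n\}$, and if $sd^r<n/\log n$ then $\big|\bigcup_{v\in S}N(v,r)\big|=(1+o(1))sd^r$; (ii) for every $v\in V$ and $r\in\mathbb N$ with $\sqrt n<d^{r+1}\le\sqrt n\log n$ there is a family $\{W(u)\subseteq S(u,r+1):u\in S(v,r)\}$ of pairwise disjoint sets with $|W(u)|=(1+o(1))d^{r+1}$ for each $u$. Let $X\subseteq V$ be any set of at most $2\sqrt n$ vertices and let $r=r(n)\in\mathbb N$ be such that $d^r\ge \sqrt n\log n$. Let $Y\subseteq V$ be a random set obtained by including each vertex of $V$ independently with probability $C/\sqrt n$, where $C\in\mathbb R$. Then, for a sufficiently large constant $C$, with probability $1-o(n^{-2})$ (over the choice of $Y$) it is possible to assign all the vertices of $X$ to distinct vertices of $Y$ such that each $u\in X$ is assigned to a vertex of $Y$ within distance $r$ of $u$.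
   Context: $\log$ is the natural logarithm. For a vertex $v$ and $r\ge0$, $S(v,r)$ is the set of vertices at distance exactly $r$ from $v$ and $N(v,r)$ is the set of vertices at distance at most $r$ from $v$. Asymptotic notation refers to $n\to\infty$ (the graph depends on $n$), with the $o(\cdot)$ terms uniform in the quantified parameters. *)

(* Defs.v *)
From HB Require Import structures.
From mathcomp Require Import all_boot all_order all_algebra.
From mathcomp Require Import boolp reals exp.
Set Implicit Arguments. Unset Strict Implicit. Unset Printing Implicit Defensive.
Import Order.TTheory GRing.Theory Num.Theory.
Local Open Scope ring_scope.

Section Graph.
Variables (T : finType) (e : rel T).

Definition nball (v : T) (r : nat) : {set T} :=
  iter r (fun A : {set T} => A :|: [set y | [exists x in A, e x y]]) [set v].

Definition sphere (v : T) (r : nat) : {set T} :=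
  if r is r'.+1 then nball v r'.+1 :\: nball v r' else [set v].

Definition nball_set (S : {set T}) (r : nat) : {set T} :=
  \bigcup_(v in S) nball v r.

Definition assignable (X Y : {set T}) (r : nat) : Prop :=
  exists f : T -> T, {in X &, injective f} /\
    (forall u, u \in X -> f u \in Y /\ f u \in nball u r).
End Graph.

Definition dpar (R : realType) (p : nat -> R) (n : nat) : R := p n * (n%:R - 1).

Definition vanishing (R : realType) (f : nat -> R) : Prop :=
  forall eps : R, 0 < eps -> exists N : nat, forall n, (N <= n)%N -> `|f n| <= eps.

(* Property (i) for an n-vertex graph, constant c, parameter d, and error
   eps standing for the o(1) term. *)
Definition prop_i (R : realType) (n : nat) (e : rel 'I_n) (c d eps : R) : Prop :=
  forall (S : {set 'I_n}) (r : nat),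
    c * Num.min (#|S|%:R * d ^+ r) n%:R <= #|nball_set e S r|%:R /\
    (#|S|%:R * d ^+ r < n%:R / ln n%:R ->
       `|#|nball_set e S r|%:R - #|S|%:R * d ^+ r| <= eps * (#|S|%:R * d ^+ r)).

Definition prop_ii (R : realType) (n : nat) (e : rel 'I_n) (d eps : R) : Prop :=
  forall (v : 'I_n) (r : nat),
    Num.sqrt n%:R < d ^+ r.+1 -> d ^+ r.+1 <= Num.sqrt n%:R * ln n%:R ->
    exists W : 'I_n -> {set 'I_n},
      (forall u, u \in sphere e v r -> W u \subset sphere e u r.+1) /\
      (forall u w, u \in sphere e v r -> w \in sphere e v r -> u != w ->
         [disjoint W u & W w]) /\
      (forall u, u \in sphere e v r ->
         `|#|W u|%:R - d ^+ r.+1| <= eps * d ^+ r.+1).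

(* Probability that the random set Y (each vertex independently with
   probability q) does NOT allow an assignment of X. *)
Definition fail_prob (R : realType) (n : nat) (e : rel 'I_n) (q : R)
    (X : {set 'I_n}) (r : nat) : R :=
  \sum_(Y : {set 'I_n} | ~~ `[< assignable e X Y r >])
     q ^+ #|Y| * (1 - q) ^+ (n - #|Y|).

(* Main.v *)
Require Import Defs.
From HB Require Import structures.
From mathcomp Require Import all_boot all_order all_algebra.
From mathcomp Require Import boolp reals exp.
From mathcomp Require Import sequences.
From mathcomp Require Import zify ring lra.
Import Order.TTheory GRing.Theory Num.Theory.
Local Open Scope ring_scope.

Local Open Scope nat_scope.

Lemma bigcup_setD (T : finType) (A : T -> {set T}) (S B : {set T}) :
  \bigcup_(u in S) (A u :\: B) = (\bigcup_(u in S) A u) :\: B.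
Proof.
apply/setP => z; rewrite inE; apply/bigcupP/andP.
  by case=> u uS; rewrite inE => /andP[zB zA]; split => //; apply/bigcupP; exists u.
by case=> zB /bigcupP[u uS zA]; exists u => //; rewrite inE zB.
Qed.

Lemma hall_aux (T : finType) (k : nat) : forall (X : {set T}) (A : T -> {set T}),
  #|X| <= k ->
  (forall S : {set T}, S \subset X -> #|S| <= #|\bigcup_(u in S) A u|) ->
  exists f : T -> T, {in X &, injective f} /\ (forall u, u \in X -> f u \in A u).
Proof.
elim: k => [|k IH] X A.
  rewrite leqn0 cards_eq0 => /eqP -> _.
  by exists id; split => [u v|u]; rewrite inE.
move=> cX H.
case: (boolP [exists S : {set T}, [&& S \subset X, S != set0, S != X &
            #|\bigcup_(u in S) A u| <= #|S|]]).
- move/existsP => [S /and4P [sSX nS0 nSX tight]].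
  have ltS : #|S| < #|X| by rewrite proper_card // properEneq nSX sSX.
  have [f1 [inj1 in1]] : exists f : T -> T, {in S &, injective f} /\
      (forall u, u \in S -> f u \in A u).
    apply: IH; first by lia.
    by move=> S' sS'; apply: H; apply: subset_trans sSX.
  set V := \bigcup_(u in S) A u in tight *.
  have S0 : 0 < #|S| by rewrite card_gt0.
  have [f2 [inj2 in2]] : exists f : T -> T, {in X :\: S &, injective f} /\
      (forall u, u \in X :\: S -> f u \in A u :\: V).
    apply: IH.
      rewrite cardsD (setIidPr sSX); lia.
    move=> S' sS'; rewrite bigcup_setD.
    have sS'X : S' \subset X by apply: subset_trans sS' (subsetDl _ _).
    have dis : S' :&: S = set0.
      apply/setP => z; rewrite !inE; apply/negbTE/andP => -[zS' zS].
      by move/subsetP: sS' => /(_ z zS'); rewrite inE zS.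
    have := H (S' :|: S); rewrite subUset sS'X sSX /= => /(_ isT).
    rewrite bigcup_setU cardsU dis cards0 subn0.
    have := cardsUI (\bigcup_(u in S') A u) V.
    rewrite cardsD -/V.
    lia.
  exists (fun u => if u \in S then f1 u else f2 u); split.
    move=> u v uX vX /=.
    case: ifP => uS; case: ifP => vS.
    + by apply: inj1.
    + move=> e; have := in2 v; rewrite inE vS vX => /(_ isT).
      rewrite -e inE => /andP[/negP nV _]; case: nV.
      by apply/bigcupP; exists u => //; apply: in1.
    + move=> e; have := in2 u; rewrite inE uS uX => /(_ isT).
      rewrite e inE => /andP[/negP nV _]; case: nV.
      by apply/bigcupP; exists v => //; apply: in1.
    + by apply: inj2; rewrite inE ?uS ?vS.
  move=> u uX; case: ifP => uS; first exact: in1.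
  by have := in2 u; rewrite !inE uS uX => /(_ isT) /andP[].
- rewrite negb_exists => /forallP ntight.
  case: (set_0Vmem X) => [X0 | [x xX]].
    by exists id; split => [u v|u]; rewrite X0 inE.
  have : 0 < #|A x|.
    by have := H [set x]; rewrite sub1set xX big_set1 cards1 => /(_ isT).
  rewrite card_gt0 => /set0Pn [y yA].
  have [f2 [inj2 in2]] : exists f : T -> T, {in X :\ x &, injective f} /\
      (forall u, u \in X :\ x -> f u \in A u :\ y).
    apply: IH.
      by move: cX; rewrite (cardsD1 x X) xX; lia.
    move=> S' sS'; rewrite bigcup_setD.
    case: (set_0Vmem S') => [-> | [z zS']]; first by rewrite cards0.
    have sS'X : S' \subset X by apply: subset_trans sS' (subsetDl _ _).
    have := ntight S'; rewrite sS'X /=.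
    have -> : S' != set0 by apply/set0Pn; exists z.
    have -> : S' != X.
      apply/eqP => e; move/subsetP: sS' => /(_ x); rewrite e => /(_ xX).
      by rewrite !inE eqxx.
    rewrite /= -ltnNge => lt.
    have := cardsD1 y (\bigcup_(u in S') A u).
    case: (y \in _); lia.
  exists (fun u => if u == x then y else f2 u); split.
    move=> u v uX vX /=.
    case: eqP => ux; case: eqP => vx.
    + by rewrite ux vx.
    + move=> e; have := in2 v; rewrite !inE vX.
      by move/eqP: vx => -> /(_ isT); rewrite -e eqxx.
    + move=> e; have := in2 u; rewrite !inE uX.
      by move/eqP: ux => -> /(_ isT); rewrite e eqxx.
    + by apply: inj2; rewrite !inE ?uX ?vX ?andbT; apply/eqP.
  move=> u uX; case: eqP => [->|ux]; first done.
  by have := in2 u; rewrite !inE uX; move/eqP: ux => -> /(_ isT) /andP[].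
Qed.

Local Open Scope ring_scope.
Lemma sum_set_prod (R : comNzRingType) (T : finType) (F : T -> bool -> R) :
  \sum_(Y : {set T}) \prod_i F i (i \in Y) = \prod_i (F i true + F i false).
Proof.
transitivity (\prod_(i : T) \sum_(b : bool) F i b); last first.
  by apply: eq_bigr => i _; rewrite big_bool.
rewrite bigA_distr_bigA.
rewrite (reindex (@FinSet T)) /=; last first.
  by exists (@finfun_of_set T) => [f _|[f] _].
apply: eq_bigr => f _; apply: eq_bigr => i _.
by rewrite unlock.
Qed.

Lemma prod_if1 (R : comNzRingType) (T : finType) (Y : {set T}) (x : R) :
  \prod_i (if i \in Y then x else 1) = x ^+ #|Y|.
Proof. by rewrite -big_mkcond /= prodr_const. Qed.

Lemma weight_prod (R : comNzRingType) n (q : R) (Y : {set 'I_n}) :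
  q ^+ #|Y| * (1 - q) ^+ (n - #|Y|) =
  \prod_i (if i \in Y then q else 1 - q).
Proof.
have -> : (n - #|Y| = #|~: Y|)%N by have := cardsC Y; rewrite card_ord; lia.
rewrite -prod_if1 -prod_if1 -big_split /=; apply: eq_bigr => i _.
by rewrite inE; case: (i \in Y); rewrite /= ?mulr1 ?mul1r.
Qed.

Lemma sum_sub_pow (R : comNzRingType) (T : finType) (X : {set T}) (x : R) :
  \sum_(S : {set T} | S \subset X) x ^+ #|S| = (1 + x) ^+ #|X|.
Proof.
pose F i (b : bool) := if b then (if i \in X then x else 0) else 1.
transitivity (\sum_(S : {set T}) \prod_i F i (i \in S)).
  rewrite big_mkcond /=; apply: eq_bigr => S _.
  case: (boolP (S \subset X)) => sSX.
    rewrite -prod_if1; apply: eq_bigr => i _; rewrite /F.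
    by case: ifP => // iS; rewrite (subsetP sSX i iS).
  have [i iS niX] := subsetPn sSX.
  by rewrite (bigD1 i) //= /F iS (negbTE niX) mul0r.
rewrite sum_set_prod -prod_if1; apply: eq_bigr => i _; rewrite /F.
by case: (i \in X); rewrite ?add0r // addrC.
Qed.

Lemma sum_le_sub (R : numDomainType) (I : finType) (P Q : pred I) (F : I -> R) :
  (forall i, 0 <= F i) -> \sum_(i | P i && Q i) F i <= \sum_(i | P i) F i.
Proof.
move=> F0; rewrite [X in _ <= X](bigID Q) /= lerDl.
by apply: sumr_ge0.
Qed.

Lemma tail_bound (R : realFieldType) n (q : R) (Z : {set 'I_n}) k :
  0 <= q <= 1 ->
  \sum_(Y : {set 'I_n} | (#|Y :&: Z| < k)%N) q ^+ #|Y| * (1 - q) ^+ (n - #|Y|)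
   <= 2 ^+ k * (1 - q / 2) ^+ #|Z|.
Proof.
move=> /andP[q0 q1].
have w0 (Y : {set 'I_n}) : 0 <= q ^+ #|Y| * (1 - q) ^+ (n - #|Y|).
  by apply: mulr_ge0; apply: exprn_ge0; lra.
apply: (@le_trans _ _ (\sum_(Y : {set 'I_n})
   q ^+ #|Y| * (1 - q) ^+ (n - #|Y|) * (2 ^+ k * (2^-1) ^+ #|Y :&: Z|))).
  rewrite [X in X <= _]big_mkcond /=; apply: ler_sum => Y _.
  have t0 : 0 <= 2 ^+ k * (2^-1) ^+ #|Y :&: Z| :> R.
    by apply: mulr_ge0; apply: exprn_ge0; rewrite ?invr_ge0; lra.
  case: ifP => h; last by apply: mulr_ge0.
  rewrite -[X in X <= _]mulr1; apply: ler_wpM2l => //.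
  rewrite -(subnK (ltnW h)) exprD -mulrA -exprMn mulfV ?expr1n ?mulr1; last by lra.
  by apply: exprn_ege1; lra.
under eq_bigr => Y _ do rewrite mulrCA.
rewrite -mulr_sumr; apply: ler_wpM2l; first by apply: exprn_ge0; lra.
have -> : \sum_(Y : {set 'I_n}) q ^+ #|Y| * (1 - q) ^+ (n - #|Y|) * (2^-1) ^+ #|Y :&: Z|
  = \sum_(Y : {set 'I_n}) \prod_i (fun i (b : bool) => if b then q * (if i \in Z then 2^-1 else 1) else 1 - q) i (i \in Y).
  apply: eq_bigr => Y _.
  rewrite weight_prod -prod_if1 -big_split /=; apply: eq_bigr => i _.
  by rewrite inE; case: (i \in Y); case: (i \in Z); rewrite /= ?mulr1 ?mul1r // mulrC.
rewrite (@sum_set_prod _ _ (fun i (b : bool) => if b then q * (if i \in Z then 2^-1 else 1) else 1 - q)) -prod_if1 le_eqVlt; apply/orP; left; apply/eqP.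
apply: eq_bigr => i _; case: (i \in Z); rewrite /=; lra.
Qed.

Lemma pow_le_expR (R : realType) (x : R) (z : nat) : 0 <= x <= 1 ->
  (1 - x) ^+ z <= expR (- (x * z%:R)).
Proof.
move=> /andP[x0 x1].
have h : 1 - x <= expR (- x) by have := expR_ge1Dx (- x); lra.
rewrite -mulNr expRM_natr; apply: lerXn2r => //; rewrite ?nnegrE ?expR_ge0 //; lra.
Qed.

Lemma powD1_le (R : realFieldType) (a : R) (k : nat) : 0 <= a ->
  (1 + a) ^+ k - 1 <= k%:R * a * (1 + a) ^+ k.
Proof.
move=> a0; elim: k => [|k IH]; first by rewrite expr0 mul0r mul0r subrr.
have p0 : 1 <= (1 + a) ^+ k by apply: exprn_ege1; lra.
rewrite exprS -natr1.
have : a * (1 + a) ^+ k <= (1 + a) * (1 + a) ^+ k by apply: ler_wpM2r; lra.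
nra.
Qed.

Lemma powD_le_expR (R : realType) (a : R) (k : nat) : 0 <= a ->
  (1 + a) ^+ k <= expR (a * k%:R).
Proof.
move=> a0; rewrite expRM_natr; apply: lerXn2r; rewrite ?nnegrE ?expR_ge0 //; try lra.
by have := expR_ge1Dx a; lra.
Qed.

Lemma two_pow_le (R : realType) (k : nat) : 2 ^+ k <= expR (k%:R) :> R.
Proof.
rewrite -[k%:R]mulr1 expRM_natl; apply: lerXn2r; rewrite ?nnegrE ?expR_ge0 //; try lra.
by have := expR_ge1Dx (1 : R); lra.
Qed.

Lemma expR_big (R : realType) (y : R) : 0 <= y -> y ^+ 6 / 720 <= expR y.
Proof.
move=> y0; have := expR_ge1Dxn 5 y0.
have -> : (5.+1`!)%:R = 720 :> R by [].
have : 0 <= y ^+ 6 / 720 by apply: divr_ge0; [apply: exprn_ge0|]; lra.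
lra.
Qed.

Lemma bigcup_setI_nball n (e : rel 'I_n) (Y S : {set 'I_n}) r :
  \bigcup_(u in S) (Y :&: nball e u r) = Y :&: nball_set e S r.
Proof.
apply/setP => z; rewrite inE /nball_set; apply/bigcupP/andP.
  by case=> u uS; rewrite inE => /andP[zY zA]; split => //; apply/bigcupP; exists u.
by case=> zY /bigcupP[u uS zA]; exists u => //; rewrite inE zY.
Qed.

Lemma not_assignable_bad n (e : rel 'I_n) (X Y : {set 'I_n}) r :
  ~ assignable e X Y r ->
  exists S : {set 'I_n}, S \subset X /\ (#|Y :&: nball_set e S r| < #|S|)%N.
Proof.
move=> na.
case: (boolP [forall S : {set 'I_n},
   (S \subset X) ==> (#|S| <= #|Y :&: nball_set e S r|)%N]).
  move/forallP => H; case: na.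
  have H2 : forall S : {set 'I_n}, S \subset X ->
      (#|S| <= #|\bigcup_(u in S) (Y :&: nball e u r)|)%N.
    move=> S sSX; rewrite bigcup_setI_nball.
    by have := H S; rewrite sSX.
  have [f [inj hf]] := @hall_aux _ #|X| X (fun u => Y :&: nball e u r) (leqnn _) H2.
  exists f; split => // u uX; have := hf u uX; rewrite inE => /andP[h1 h2].
  by split.
rewrite negb_forall => /existsP [S]; rewrite negb_imply -ltnNge => /andP[h1 h2].
by exists S.
Qed.



Lemma term2_lem (R : realType) (n : nat) (m delta x : R) :
  0 <= m -> m * m = n%:R -> n%:R * x = 1 -> 0 < x -> 16 <= delta * n%:R -> 0 < delta ->
  expR (- (4 * m)) <= delta * x ^+ 2 / 2.
Proof.
move=> m0 mm nx x0 nd hdelta.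
have n3p : 0 <= n%:R ^+ 3 :> R by apply: exprn_ge0.
have hy5 : 5 * n%:R ^+ 3 <= expR (4 * m).
  have y0 : 0 <= 4 * m by lra.
  have hy := @expR_big R (4 * m) y0.
  have m6 : (4 * m) ^+ 6 = 4096 * n%:R ^+ 3 by rewrite -mm; ring.
  rewrite m6 in hy; lra.
have n3 : delta * x ^+ 2 * n%:R ^+ 3 = delta * n%:R.
  have -> : delta * x ^+ 2 * n%:R ^+ 3 = delta * (n%:R * x) ^+ 2 * n%:R by ring.
  by rewrite nx expr1n mulr1.
have x2 : 0 <= delta * x ^+ 2 by apply: mulr_ge0; [lra | apply: exprn_ge0; lra].
rewrite expRN -[X in X <= _]mul1r ler_pdivrMr ?expR_gt0 //.
have : delta * x ^+ 2 * (5 * n%:R ^+ 3) <= delta * x ^+ 2 * expR (4 * m).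
  by apply: ler_wpM2l.
lra.
Qed.
Lemma final_arith (R : realType) (n k0 : nat) (m delta : R) :
  2 < n%:R :> R -> 8 * expR 1 <= delta * n%:R -> 0 < delta ->
  1 <= m -> m * m = n%:R -> k0%:R <= 2 * m ->
  (1 + 2 * (n%:R^-1) ^+ 8) ^+ k0 - 1 + (1 + 1) ^+ k0 * expR (- (6 * m))
    <= delta / n%:R ^+ 2.
Proof.
move=> n2 nd hdelta m1 mm hX2.
have e0 : 0 < expR (1 : R) := expR_gt0 1.
have e1 : 2 <= expR (1 : R) by have := expR_ge1Dx (1 : R); lra.
have n0 : 0 < n%:R :> R by lra.
pose a : R := 2 * n%:R^-1 ^+ 8.
pose E : R := expR (- (6 * m)).
have a0 : 0 <= a by apply: mulr_ge0; [lra|apply: exprn_ge0; rewrite invr_ge0; lra].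
have E0 : 0 <= E by apply: expR_ge0.
rewrite -/a -/E.
pose x : R := n%:R^-1.
have ax : a = 2 * x ^+ 8 by [].
have x0 : 0 < x by rewrite /x invr_gt0.
have nx : n%:R * x = 1 by rewrite /x mulfV //; apply/eqP => h; lra.
have xh : x <= 1 / 2.
  have : 0 < x * (n%:R - 2) by apply: mulr_gt0; lra.
  lra.
have mn : m <= n%:R.
  have : m * 1 <= m * m by apply: ler_wpM2l; lra.
  lra.
have hk : k0%:R <= 2 * n%:R :> R.
  lra.
have x4 : x ^+ 4 <= 1 by apply: exprn_ile1; lra.
have x6 : x ^+ 6 <= 1 by apply: exprn_ile1; lra.
have x5 : x ^+ 5 <= x.
  rewrite exprS; have : x * x ^+ 4 <= x * 1 by apply: ler_wpM2l; lra.
  lra.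
have x7 : x ^+ 7 <= x.
  rewrite exprS; have : x * x ^+ 6 <= x * 1 by apply: ler_wpM2l; lra.
  lra.
have x72 : x ^+ 7 = x ^+ 2 * x ^+ 5 by rewrite -exprD.
have x2 : 0 <= x ^+ 2 by apply: exprn_ge0; lra.
have x5p : 0 <= x ^+ 5 by apply: exprn_ge0; lra.
have t7 : k0%:R * a <= 4 * x ^+ 7.
  have h8 : 0 <= x ^+ 8 by apply: exprn_ge0; lra.
  have : k0%:R * x ^+ 8 <= 2 * n%:R * x ^+ 8 by apply: ler_wpM2r.
  have -> : 2 * n%:R * x ^+ 8 = 2 * x ^+ 7 by rewrite exprS mulrA -(mulrA 2) nx mulr1.
  rewrite ax; lra.
have ka0 : 0 <= k0%:R * a by apply: mulr_ge0.
have p1 := @powD1_le R a k0 a0.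
have p2 := @powD_le_expR R a k0 a0.
have x7b : 4 * x ^+ 7 <= 1.
  have xx : x ^+ 2 <= 1 / 4.
    have : x * x <= x * (1 / 2) by apply: ler_wpM2l; lra.
    rewrite expr2; lra.
  have : x ^+ 2 * x ^+ 5 <= x ^+ 2 * 1 by apply: ler_wpM2l => //; lra.
  rewrite x72; lra.
have p3 : expR (a * k0%:R) <= expR 1 by rewrite ler_expR; lra.
have ex : 8 * expR 1 * x <= delta.
  have : 8 * expR 1 * x <= delta * n%:R * x by apply: ler_wpM2r; lra.
  by rewrite -[delta * n%:R * x]mulrA nx mulr1.
have term1 : (1 + a) ^+ k0 - 1 <= delta * x ^+ 2 / 2.
  apply: (le_trans p1).
  apply: (@le_trans _ _ (4 * x ^+ 7 * expR 1)).
    apply: ler_pM => //; first by apply: exprn_ge0; lra.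
    exact: le_trans p2 p3.
  rewrite x72.
  have : x ^+ 2 * (8 * expR 1 * x ^+ 5) <= x ^+ 2 * delta.
    apply: ler_wpM2l => //.
    have : 8 * expR 1 * x ^+ 5 <= 8 * expR 1 * x by apply: ler_wpM2l; lra.
    lra.
  lra.
have term2 : expR (- (4 * m)) <= delta * x ^+ 2 / 2.
  apply: term2_lem _ mm nx x0 _ hdelta; lra.
have tE : (1 + 1) ^+ k0 * E <= expR (- (4 * m)).
  apply: (@le_trans _ _ (expR (2 * m) * E)).
    apply: ler_wpM2r => //; apply: le_trans (two_pow_le _ k0) _; rewrite ler_expR; lra.
  by rewrite /E -expRD ler_expR; lra.
have -> : delta / n%:R ^+ 2 = delta * x ^+ 2 by rewrite /x exprVn.
lra.
Qed.

Theorem lemma2p2 (R : realType) (p : nat -> R) (G : forall n : nat, rel 'I_n)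
    (c : R) (eps : nat -> R) (N0 : nat) :
  (forall n, symmetric (G n) /\ irreflexive (G n)) ->
  0 < c -> vanishing eps ->
  (forall n, (N0 <= n)%N -> ln (n%:R : R) ^+ 3 <= dpar p n) ->
  (forall n, (N0 <= n)%N -> prop_i (G n) c (dpar p n) (eps n)) ->
  (forall n, (N0 <= n)%N -> prop_ii (G n) (dpar p n) (eps n)) ->
  exists C0 : R, forall C : R, C0 <= C ->
    forall delta : R, 0 < delta -> exists N : nat, forall n : nat, (N <= n)%N ->
      forall (X : {set 'I_n}) (r : nat),
        #|X|%:R <= 2 * Num.sqrt (n%:R : R) ->
        Num.sqrt (n%:R : R) * ln (n%:R : R) <= dpar p n ^+ r ->
        fail_prob (G n) (C / Num.sqrt n%:R) X r <= delta / (n%:R ^+ 2).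
Proof.
move=> _ c0 _ _ hi _.
exists (16 / c) => C hC delta hdelta.
have C0 : 0 < C by apply: lt_le_trans hC; apply: divr_gt0.
have Cc : 16 <= C * c by rewrite -(ler_pdivrMr _ _ c0).
have e1 : 2 <= expR (1 : R) by have := expR_ge1Dx (1 : R); lra.
pose B : R := C ^+ 2 + 8 * expR 1 / delta + 2.
exists (maxn N0 (Num.truncn B).+1) => n.
rewrite geq_max => /andP[hN0 hB] X r hX hr.
have nB : B < n%:R.
  apply: lt_le_trans (truncnS_gt B) _; by rewrite ler_nat.
have C2 : 0 <= C ^+ 2 by apply: exprn_ge0; lra.
have ed : 0 <= 8 * expR 1 / delta by apply: divr_ge0; lra.
have n2 : 2 < n%:R :> R by rewrite /B in nB; lra.
have n0 : 0 < n%:R :> R by lra.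
have nC : C ^+ 2 <= n%:R by rewrite /B in nB; lra.
have nd : 8 * expR 1 <= delta * n%:R.
  have : 8 * expR 1 / delta <= n%:R by rewrite /B in nB; lra.
  rewrite ler_pdivrMr //; nra.
set m := Num.sqrt (n%:R : R).
set L := ln (n%:R : R).
set d := dpar p n.
set q := C / m.
have m0 : 0 < m by rewrite sqrtr_gt0.
have mm : m * m = n%:R by rewrite -expr2 sqr_sqrtr //; lra.
have mC : C <= m.
  have : Num.sqrt (C ^+ 2) <= m by rewrite ler_sqrt //; lra.
  by rewrite sqrtr_sqr ger0_norm //; lra.
have m1 : 1 <= m by nra.
have L0 : 0 <= L by apply: ln_ge0; lra.
have qm : q * m = C by rewrite /q mulrVK // unitfE; lra.
have q0 : 0 < q by apply: divr_gt0.
have q1 : q <= 1 by rewrite /q ler_pdivrMr //; lra.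
pose w (Y : {set 'I_n}) := q ^+ #|Y| * (1 - q) ^+ (n - #|Y|).
pose Z S := nball_set (G n) S r.
pose a : R := 2 * (n%:R^-1) ^+ 8.
pose E : R := expR (- (6 * m)).
have a0 : 0 <= a by apply: mulr_ge0; [lra|apply: exprn_ge0; rewrite invr_ge0; lra].
have E0 : 0 <= E by apply: expR_ge0.
have Sbound : forall S : {set 'I_n}, S \subset X ->
    \sum_(Y : {set 'I_n} | (#|Y :&: Z S| < #|S|)%N) w Y <= a ^+ #|S| + E.
  move=> S sSX.
  have qq : 0 <= q <= 1 by apply/andP; split; lra.
  apply: (le_trans (@tail_bound R n q (Z S) #|S| qq)).
  set k := #|S|; set z := #|Z S|.
  have hk : k%:R <= 2 * m.
    apply: le_trans hX; rewrite ler_nat; exact: subset_leq_card.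
  have k0 : 0 <= k%:R :> R by [].
  have [hi1 _] := hi n hN0 S r.
  rewrite -/d -/(Z S) -/z in hi1.
  have ex := @pow_le_expR R (q / 2) z.
  have q2 : 0 <= q / 2 <= 1 by apply/andP; split; lra.
  have {ex} ex := ex q2.
  have p2 : 0 <= 2 ^+ k :> R by apply: exprn_ge0; lra.
  have [hle|hlt] := leP (k%:R * d ^+ r) n%:R.
  - rewrite (min_idPl hle) in hi1.
    have hz : c * k%:R * (m * L) <= z%:R.
      apply: le_trans hi1; rewrite -mulrA; apply: ler_wpM2l; first lra.
      by apply: ler_wpM2l.
    have hz2 : 8 * (k%:R * L) <= q / 2 * z%:R.
      have : q / 2 * (c * k%:R * (m * L)) <= q / 2 * z%:R by apply: ler_wpM2l; lra.
      have -> : q / 2 * (c * k%:R * (m * L)) = (q * m) * c * (k%:R * L) / 2.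
        by rewrite mulrC; field.
      rewrite qm.
      have : 16 * (k%:R * L) <= C * c * (k%:R * L) by apply: ler_wpM2r => //; apply: mulr_ge0.
      lra.
    have ex2 : expR (- (q / 2 * z%:R)) <= expR (- (8 * (k%:R * L))).
      by rewrite ler_expR; lra.
    have eq1 : expR (- (8 * (k%:R * L))) = (n%:R^-1) ^+ (8 * k) :> R.
      have -> : - (8 * (k%:R * L)) = (8 * k)%:R * (- L) by rewrite natrM; ring.
      by rewrite expRM_natl expRN lnK // posrE.
    apply: (@le_trans _ _ (2 ^+ k * (n%:R^-1) ^+ (8 * k))).
      apply: ler_wpM2l => //; apply: le_trans ex _; rewrite -eq1; exact: ex2.
    by rewrite /a exprMn exprM lerDl.
  - rewrite (min_idPr (ltW hlt)) in hi1.
    have hz2 : 8 * m <= q / 2 * z%:R.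
      have : q / 2 * (c * n%:R) <= q / 2 * z%:R by apply: ler_wpM2l; lra.
      have -> : q / 2 * (c * n%:R) = (q * m) * c * m / 2.
        by rewrite -mm; field.
      rewrite qm.
      have : 16 * m <= C * c * m by apply: ler_wpM2r; lra.
      lra.
    have ex2 : expR (- (q / 2 * z%:R)) <= expR (- (8 * m)).
      by rewrite ler_expR; lra.
    have p3 : 0 <= (1 - q / 2) ^+ z by apply: exprn_ge0; lra.
    apply: (@le_trans _ _ (expR (2 * m) * expR (- (8 * m)))).
      apply: ler_pM => //.
        apply: le_trans (two_pow_le _ k) _; rewrite ler_expR; lra.
      exact: le_trans ex ex2.
    rewrite -expRD; apply: (@le_trans _ _ E).
      rewrite ler_expR; lra.
    by rewrite lerDr exprn_ge0.
have w0 : forall Y, 0 <= w Y.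
  by move=> Y; apply: mulr_ge0; apply: exprn_ge0; lra.
have step1 : fail_prob (G n) q X r <=
    \sum_(S : {set 'I_n} | (S \subset X) && (S != set0))
       \sum_(Y : {set 'I_n} | (#|Y :&: Z S| < #|S|)%N) w Y.
  rewrite /fail_prob big_mkcond /=.
  apply: (@le_trans _ _ (\sum_(Y : {set 'I_n})
     \sum_(S : {set 'I_n} | (S \subset X) && (S != set0))
        (if (#|Y :&: Z S| < #|S|)%N then w Y else 0))).
    apply: ler_sum => Y _.
    have sum0 : forall P : pred {set 'I_n},
        0 <= \sum_(S : {set 'I_n} | P S) (if (#|Y :&: Z S| < #|S|)%N then w Y else 0).
      by move=> P; apply: sumr_ge0 => S _; case: ifP.
    case: ifP => h; last exact: sum0.
    move/asboolPn: h => h.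
    have [S [sSX bad]] := @not_assignable_bad _ _ _ _ _ h.
    have S0 : S != set0 by rewrite -card_gt0; apply: leq_ltn_trans (leq0n _) bad.
    rewrite (bigD1 S) /=; last by rewrite sSX S0.
    rewrite -/(Z S) bad -[X in X <= _]addr0; apply: lerD; [exact: lexx | exact: sum0].
  rewrite exchange_big /=; apply: ler_sum => S _.
  by rewrite -big_mkcond.
apply: (le_trans step1).
apply: (@le_trans _ _ (\sum_(S : {set 'I_n} | (S \subset X) && (S != set0)) (a ^+ #|S| + E))).
  by apply: ler_sum => S /andP[sSX _]; apply: Sbound.
rewrite big_split /=.
have hA : \sum_(S : {set 'I_n} | (S \subset X) && (S != set0)) a ^+ #|S| = (1 + a) ^+ #|X| - 1.
  have := sum_sub_pow _ _ X a; rewrite (bigD1 set0) ?sub0set //= cards0 expr0 => <-.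
  ring.
have hE : \sum_(S : {set 'I_n} | S \subset X) E = (1 + 1) ^+ #|X| * E.
  rewrite -(sum_sub_pow _ _ X 1) mulr_suml; apply: eq_bigr => S _.
  by rewrite expr1n mul1r.
have hE2 := @sum_le_sub R _ (fun S : {set 'I_n} => S \subset X) (fun S : {set 'I_n} => S != set0) (fun _ => E) (fun _ => E0).
rewrite /= hE in hE2.
rewrite hA.
set k0 := #|X| in hX hE2 *.
have hX2 : k0%:R <= 2 * m :> R by exact: hX.
apply: le_trans (lerD (lexx _) hE2) _.
exact: (@final_arith _ _ _ _ _ n2 nd hdelta m1 mm hX2).
Qed.
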